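(* Let $G$ be a connected graph with $\lambda(G)=\sigma(G)=k\geq 1$. Then there exist vertex-disjoint connected graphs $G_1,G_2$ and a set $K$ of $k$ edges, each joining a vertex of $G_1$ to a vertex of $G_2$, such that $G=G_1\ast_K G_2$, and each $G_i$ satisfies exactly one of: (i) $G_i$ has one vertex and no edges; (ii) $k\leq\sigma(G_i)<\lambda(G_i)$; (iii) $k<\sigma(G_i)=\lambda(G_i)$; (iv) $\sigma(G_i)=\lambda(G_i)=k$.
   Context: Graphs may have multiple edges. $\lambda(H)$ is the edge connectivity of $H$ and $\sigma(H)$ the maximum number of pairwise edge-disjoint spanning trees of $H$. For vertex-disjoint graphs $G_1=(V_1,E_1)$, $G_2=(V_2,E_2)$ and a set $K$ of edges each with one end in $V_1$ and one in $V_2$, the $K$-join $G_1\ast_K G_2$ has vertex set $V_1\cup V_2$ and edge set $E_1\cup E_2\cup K$. *)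

(* Defs.v *)
(* An ambient "edge structure" is given by finite types V (vertices),
   E (edge names) and ends : E -> V * V (the two endpoints of each edge).
   A (multi)graph is a pair (A, F) of a vertex set A : {set V} and an edge
   set F : {set E} such that every edge of F has both ends in A. *)
From HB Require Import structures.
From mathcomp Require Import all_boot.
Set Implicit Arguments. Unset Strict Implicit. Unset Printing Implicit Defensive.

Section MultiGraph.
Variables (V E : finType) (ends : E -> V * V).

Definition loopless : bool := [forall e, (ends e).1 != (ends e).2].

Definition is_graph (A : {set V}) (F : {set E}) : bool :=
  [forall e in F, ((ends e).1 \in A) && ((ends e).2 \in A)].

Definition adjF (F : {set E}) : rel V :=
  fun x y => [exists e in F, (ends e == (x, y)) || (ends e == (y, x))].

Definition connectedG (A : {set V}) (F : {set E}) : bool :=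
  [forall x in A, forall y in A, connect (adjF F) x y].

Definition cut (F : {set E}) (X : {set V}) : {set E} :=
  [set e in F | ((ends e).1 \in X) != ((ends e).2 \in X)].

Definition lambda (A : {set V}) (F : {set E}) : nat :=
  if (#|A| <= 1)%N then 0%N else
  \big[minn/#|E|]_(X : {set V} | (X \subset A) && (X != set0) && (X != A))
     #|cut F X|.

Definition acyclic (T : {set E}) : bool :=
  [forall e in T, ~~ connect (adjF (T :\ e)) (ends e).1 (ends e).2].

Definition spanning_tree (A : {set V}) (F : {set E}) (T : {set E}) : bool :=
  [&& T \subset F, connectedG A T & acyclic T].

Definition has_disjoint_trees (A : {set V}) (F : {set E}) (t : nat) : bool :=
  [exists Ts : {ffun 'I_t -> {set E}},
     [forall i, spanning_tree A F (Ts i)] &&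
     [forall i, forall j, (i != j) ==> [disjoint Ts i & Ts j]]].

(* For graphs with >= 2 vertices every spanning tree has an edge, so this
   number is at most #|E| and the bounded max below is exact. *)
Definition sigma (A : {set V}) (F : {set E}) : nat :=
  \max_(t < #|E|.+1 | has_disjoint_trees A F t) t.

Definition case_i (A : {set V}) (F : {set E}) : bool :=
  (#|A| == 1%N) && (F == set0).
Definition case_ii (k : nat) (A : {set V}) (F : {set E}) : bool :=
  (k <= sigma A F < lambda A F)%N.
Definition case_iii (k : nat) (A : {set V}) (F : {set E}) : bool :=
  (k < sigma A F)%N && (sigma A F == lambda A F).
Definition case_iv (k : nat) (A : {set V}) (F : {set E}) : bool :=
  (sigma A F == lambda A F) && (lambda A F == k).

Definition exactly_one_case (k : nat) (A : {set V}) (F : {set E}) : bool :=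
  (case_i A F + case_ii k A F + case_iii k A F + case_iv k A F == 1)%N.

End MultiGraph.

(* Main.v *)
Require Import Defs.
From HB Require Import structures.
From mathcomp Require Import all_boot.
Set Implicit Arguments. Unset Strict Implicit. Unset Printing Implicit Defensive.

Lemma bigmin_cases (I : finType) (P : pred I) (F : I -> nat) d :
  \big[minn/d]_(i | P i) F i = d \/ exists2 i, P i & \big[minn/d]_(i | P i) F i = F i.
Proof.
apply: (big_ind (fun m => m = d \/ exists2 i, P i & m = F i)).
- by left.
- move=> x y Hx Hy; rewrite /minn; by case: ltnP.
- by move=> i Pi; right; exists i.
Qed.

Lemma bigmin_le_seq (I : eqType) (r : seq I) (P : pred I) F d i :
  i \in r -> P i -> \big[minn/d]_(j <- r | P j) F j <= F i.
Proof.
elim: r => // x r IH; rewrite inE big_cons => /orP[/eqP<-|ir] Pi.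
  by rewrite Pi geq_minl.
by case: (P x); [rewrite geq_min IH ?orbT | exact: IH].
Qed.

Lemma bigmin_le (I : finType) (P : pred I) F d i :
  P i -> \big[minn/d]_(j | P j) F j <= F i.
Proof. by apply: bigmin_le_seq; rewrite mem_index_enum. Qed.

Lemma bigmax_cases n (P : pred 'I_n) :
  \max_(t < n | P t) t = 0 \/ exists2 t : 'I_n, P t & \max_(t < n | P t) t = t.
Proof.
apply: (big_ind (fun m => m = 0 \/ exists2 t : 'I_n, P t & m = t)).
- by left.
- move=> x y Hx Hy; rewrite /maxn; by case: ltnP.
- by move=> i Pi; right; exists i.
Qed.

Section G.
Variables (V E : finType) (ends : E -> V * V).

Definition inside (X : {set V}) : {set E} :=
  [set e | ((ends e).1 \in X) && ((ends e).2 \in X)].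

Lemma adjF_sym (F : {set E}) : symmetric (adjF ends F).
Proof.
move=> x y; apply/existsP/existsP => [][f /andP[fF H]]; exists f;
  by rewrite fF orbC.
Qed.

Lemma conn_sym (F : {set E}) x y : connect (adjF ends F) x y = connect (adjF ends F) y x.
Proof. exact: (sym_connect_sym (adjF_sym F)). Qed.

Lemma conn_sub (F F' : {set E}) x y : F \subset F' ->
  connect (adjF ends F) x y -> connect (adjF ends F') x y.
Proof.
move=> sF; apply: connect_sub => u w /existsP[f /andP[fF H]].
apply: connect1; apply/existsP; exists f; by rewrite (subsetP sF _ fF).
Qed.

Lemma connectedG_sub (A : {set V}) (F F' : {set E}) : F \subset F' ->
  connectedG ends A F -> connectedG ends A F'.
Proof.
move=> sF /forall_inP H; apply/forall_inP => x xA; apply/forall_inP => y yA.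
by apply: conn_sub sF _; move/forall_inP: (H x xA) => /(_ y yA).
Qed.

Lemma acyclic_sub (S T : {set E}) : S \subset T -> acyclic ends T -> acyclic ends S.
Proof.
move=> sST /forall_inP H; apply/forall_inP => e eS; apply/negP => C.
have := H e (subsetP sST _ eS); rewrite (conn_sub _ C) //.
by apply: setSD.
Qed.

Lemma crossing (T : {set E}) (Y : {set V}) y z :
  connect (adjF ends T) y z -> y \in Y -> z \notin Y ->
  exists2 f, f \in T & ((ends f).1 \in Y) != ((ends f).2 \in Y).
Proof.
move=> yz yY zY.
case: (boolP [exists f in T, ((ends f).1 \in Y) != ((ends f).2 \in Y)]).
  by case/exists_inP => f fT cf; exists f.
move/exists_inPn => H.
have cl : closed (adjF ends T) Y.
  move=> x w /existsP[f /andP[fT /orP[/eqP ef|/eqP ef]]];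
    have := H f fT; rewrite ef /= negbK => /eqP //.
have := closed_connect cl yz.
by rewrite yY (negbTE zY).
Qed.
End G.

Section G2.
Variables (V E : finType) (ends : E -> V * V).
Local Notation inside := (inside ends).

Lemma restrict_conn (T : {set E}) (X : {set V}) a b :
  connectedG ends setT T -> a \in X -> b \notin X ->
  (forall f, f \in T -> ((ends f).1 \in X) != ((ends f).2 \in X) ->
     ends f = (a, b) \/ ends f = (b, a)) ->
  connectedG ends X (T :&: inside X).
Proof.
move=> conn aX bX cr.
set TX := T :&: inside X; set TN := T :&: inside (~: X).
pose U := [set v | connect (adjF ends TX) a v || connect (adjF ends TN) b v].
have clX : closed (adjF ends TX) X.
  move=> x w /existsP[f /andP[]]; rewrite !inE => /andP[_ /andP[f1 f2]].
  by case/orP => /eqP ef; rewrite ef /= in f1 f2; rewrite f1 f2.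
have clN : closed (adjF ends TN) X.
  move=> x w /existsP[f /andP[]]; rewrite !inE => /andP[_ /andP[f1 f2]].
  by case/orP => /eqP ef; rewrite ef /= in f1 f2;
    rewrite (negbTE f1) (negbTE f2).
have step : forall f p q, f \in T -> ends f = (p, q) \/ ends f = (q, p) ->
    p \in U -> q \in U.
  move=> f p q fT ef; rewrite !inE.
  have adjX : (p \in X) -> (q \in X) -> adjF ends TX p q.
    move=> pX qX; apply/existsP; exists f; rewrite !inE fT.
    by case: ef => ->; rewrite /= ?pX ?qX ?eqxx ?orbT.
  have adjN : (p \notin X) -> (q \notin X) -> adjF ends TN p q.
    move=> pX qX; apply/existsP; exists f; rewrite !inE fT.
    by case: ef => ->; rewrite /= ?pX ?qX ?eqxx ?orbT.
  case Hp: (p \in X); case Hq: (q \in X).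
  - case/orP => [ap|bp].
      by rewrite (connect_trans ap (connect1 (adjX Hp Hq))).
    by have := closed_connect clN bp; rewrite (negbTE bX) Hp.
  - have := cr f fT; case: ef => ef; rewrite ef /= Hp Hq => /(_ isT) [] [-> ->];
      by move=> _; rewrite connect0 ?orbT.
  - have := cr f fT; case: ef => ef; rewrite ef /= Hp Hq => /(_ isT) [] [-> ->];
      by move=> _; rewrite connect0 ?orbT.
  - case/orP => [ap|bp].
      by have := closed_connect clX ap; rewrite aX Hp.
    by rewrite (connect_trans bp (connect1 (adjN _ _))) ?orbT ?Hp ?Hq.
have clU : closed (adjF ends T) U.
  have st : forall p q, adjF ends T p q -> p \in U -> q \in U.
    move=> p q /existsP[f /andP[fT /orP[/eqP ef|/eqP ef]]].
      by apply: (step f) => //; left.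
    by apply: (step f) => //; right.
  move=> x w xw; apply/idP/idP; first exact: st.
  by apply: st; rewrite adjF_sym.
have aU : a \in U by rewrite inE connect0.
have inU : forall x, x \in X -> connect (adjF ends TX) a x.
  move=> x xX.
  have : x \in U.
    have := closed_connect clU (_ : connect (adjF ends T) a x).
    rewrite aU => <- //.
    by move/forall_inP: conn => /(_ a (in_setT a)) /forall_inP /(_ x (in_setT x)).
  rewrite inE => /orP[//|bx].
  by have := closed_connect clN bx; rewrite (negbTE bX) xX.
apply/forall_inP => x xX; apply/forall_inP => y yX.
by apply: (connect_trans _ (inU y yX)); rewrite conn_sym inU.
Qed.
End G2.

Section G3.
Variables (V E : finType) (ends : E -> V * V).

Lemma trees_le_cut (A : {set V}) (F : {set E}) (t : nat) (Y : {set V}) :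
  has_disjoint_trees ends A F t -> Y \subset A -> Y != set0 -> Y != A ->
  t <= #|cut ends F Y|.
Proof.
move=> /existsP[Ts /andP[/forallP st /forallP dj]] sYA /set0Pn[y yY] nYA.
have [_ [z zA zY]] : Y \subset A /\ exists2 z, z \in A & z \notin Y.
  by apply/properP; rewrite properEneq nYA sYA.
have ex : forall i, exists f, f \in Ts i /\ f \in cut ends F Y.
  move=> i; have /and3P[sTF cT _] := st i.
  have c : connect (adjF ends (Ts i)) y z.
    by move/forall_inP: cT => /(_ y (subsetP sYA _ yY)) /forall_inP /(_ z zA).
  have [f fT cf] := crossing c yY zY.
  by exists f; rewrite inE (subsetP sTF _ fT) cf.
have [h hP] := fin_all_exists ex.
have hinj : injective h.
  move=> i j eq; apply/eqP; apply/negPn/negP => nij.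
  have := dj i => /forallP /(_ j); rewrite nij /= => d.
  have := disjointFr d (proj1 (hP i)); by rewrite eq (proj1 (hP j)).
rewrite -[t]card_ord -cardsT -(card_imset _ hinj).
apply: subset_leq_card; apply/subsetP => f /imsetP[i _ ->].
exact: (proj2 (hP i)).
Qed.

Lemma sigma_le_lambda (A : {set V}) (F : {set E}) :
  1 < #|A| -> sigma ends A F <= lambda ends A F.
Proof.
move=> A2; rewrite /lambda ifN; last by rewrite -ltnNge.
rewrite /sigma.
apply: (big_ind (fun m => m <= _)) => //.
  by move=> x y; rewrite geq_max => -> ->.
move=> t Ht; apply: (big_ind (fun m => t <= m)).
- by rewrite -ltnS ltn_ord.
- by move=> x y; rewrite leq_min => -> ->.
- move=> Y /andP[/andP[sYA Y0] YA]; exact: trees_le_cut Ht sYA Y0 YA.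
Qed.

Lemma exactly_one k (A : {set V}) (F : {set E}) :
  0 < k -> k <= #|E| -> loopless ends ->
  (forall e, e \in F -> ((ends e).1 \in A) && ((ends e).2 \in A)) ->
  A != set0 -> has_disjoint_trees ends A F k -> exactly_one_case ends k A F.
Proof.
move=> k0 kE ll FA A0 Hk.
rewrite /exactly_one_case /case_i /case_ii /case_iii /case_iv.
case: (boolP (#|A| == 1)) => A1.
  have -> : F == set0.
    apply/eqP/setP => e; rewrite in_set0; apply/negbTE/negP => eF.
    move/cards1P: A1 => [v Av]; case/andP: (FA e eF); rewrite Av !in_set1.
    move=> /eqP e1 /eqP e2.
    by move/forallP: ll => /(_ e); rewrite e1 e2 eqxx.
  rewrite /lambda (eqP A1) /=.
  by case: (sigma ends A F) => [|s]; case: k k0 {kE Hk} => // k _; rewrite ?ltn0 ?andbF.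
have A2 : 1 < #|A|.
  have Ap : 0 < #|A| by rewrite lt0n cards_eq0.
  by rewrite ltn_neqAle Ap andbT eq_sym.
have ks : k <= sigma ends A F.
  have kE' : k < #|E|.+1 by [].
  exact: (leq_bigmax_cond (Ordinal kE') Hk).
have sl := sigma_le_lambda F A2.
move: ks sl; set s := sigma ends A F; set l := lambda ends A F => ks sl.
rewrite /= add0n.
case: (ltngtP s l) => [sl'|sl'|<-]; first by rewrite ks andbF.
  by move: sl'; rewrite ltnNge sl.
by move: ks; rewrite leq_eqVlt andbF andbT => /orP[/eqP->|ks]; rewrite ?ltnn ?eqxx // (gtn_eqF ks) ks.
Qed.
End G3.

Section G4.
Variables (V E : finType) (ends : E -> V * V).
Local Notation inside := (inside ends).

Lemma cutC (X : {set V}) : cut ends setT (~: X) = cut ends setT X.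
Proof.
apply/setP => e; rewrite !inE.
by case: ((ends e).1 \in X); case: ((ends e).2 \in X).
Qed.

Lemma side k (Ts : {ffun 'I_k -> {set E}}) (X : {set V}) :
  loopless ends -> 0 < k ->
  (forall i, spanning_tree ends setT setT (Ts i)) ->
  (forall i j, i != j -> [disjoint Ts i & Ts j]) ->
  X != set0 -> X != setT -> #|cut ends setT X| = k ->
  connectedG ends X (inside X) /\ exactly_one_case ends k X (inside X).
Proof.
move=> ll k0 st dj /set0Pn[a aX] XT cX.
have [b bX] : exists b, b \notin X.
  case: (boolP [exists b, b \notin X]) => [/existsP//|/existsPn H].
  by case/eqP: XT; apply/setP => v; rewrite inE; apply/negbNE.
have ex : forall i, exists f, f \in Ts i /\ f \in cut ends setT X.
  move=> i; have /and3P[_ cT _] := st i.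
  have c : connect (adjF ends (Ts i)) a b.
    by move/forall_inP: cT => /(_ a (in_setT a)) /forall_inP /(_ b (in_setT b)).
  have [f fT cf] := crossing c aX bX.
  by exists f; rewrite inE in_setT cf.
have [g gP] := fin_all_exists ex.
have ginj : injective g.
  move=> i j eq; apply/eqP; apply/negPn/negP => nij.
  have := disjointFr (dj i j nij) (proj1 (gP i)); by rewrite eq (proj1 (gP j)).
have im : g @: setT = cut ends setT X.
  apply/eqP; rewrite eqEcard; apply/andP; split.
    by apply/subsetP => f /imsetP[i _ ->]; exact: (proj2 (gP i)).
  by rewrite (card_imset _ ginj) cardsT card_ord cX.
have uniq_cr : forall i f, f \in Ts i -> f \in cut ends setT X -> f = g i.
  move=> i f fT; rewrite -im => /imsetP[j _ ef]; subst f.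
  case: (eqVneq i j) => [->//|nij].
  by have := disjointFr (dj i j nij) fT; rewrite (proj1 (gP j)).
have kE : k <= #|E| by rewrite -cX max_card.
pose Ts' := [ffun i => Ts i :&: inside X].
have st' : forall i, spanning_tree ends X (inside X) (Ts' i).
  move=> i; rewrite /spanning_tree ffunE subsetIr /=.
  have /and3P[_ cT aT] := st i.
  rewrite (acyclic_sub (subsetIl _ _) aT) andbT.
  have := proj2 (gP i); rewrite inE in_setT /= => cg.
  have hcr : forall f, f \in Ts i -> ((ends f).1 \in X) != ((ends f).2 \in X) ->
      ends f = ends (g i).
    by move=> f fT cf; rewrite (uniq_cr i f fT) // inE in_setT.
  case H1 : ((ends (g i)).1 \in X).
  - apply: (restrict_conn (a := (ends (g i)).1) (b := (ends (g i)).2)) cT _ _ _ => //.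
      by move: cg; rewrite H1; case: (_ \in X).
    move=> f fT cf; left; rewrite (hcr f fT cf); by case: (ends (g i)).
  - apply: (restrict_conn (a := (ends (g i)).2) (b := (ends (g i)).1)) cT _ _ _ => //.
      by move: cg; rewrite H1; case: (_ \in X).
      by rewrite H1.
    move=> f fT cf; right; rewrite (hcr f fT cf); by case: (ends (g i)).
have hd : has_disjoint_trees ends X (inside X) k.
  apply/existsP; exists Ts'; apply/andP; split; first by apply/forallP.
  apply/forallP => i; apply/forallP => j; apply/implyP => nij.
  rewrite !ffunE; apply: disjointWl (subsetIl _ _) _.
  by apply: disjointWr (subsetIl _ _) _; apply: dj.
split.
  have /and3P[s c _] := st' (Ordinal k0).
  exact: connectedG_sub s c.
apply: exactly_one k0 kE ll _ _ hd.
  by move=> e; rewrite inE.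
by apply/set0Pn; exists a.
Qed.
End G4.
Unset Implicit Arguments. Set Strict Implicit. Set Printing Implicit Defensive.

Theorem mainTheorem6 (V E : finType) (ends : E -> V * V) (k : nat) :
  loopless ends ->
  connectedG ends [set: V] [set: E] ->
  lambda ends [set: V] [set: E] = k ->
  sigma ends [set: V] [set: E] = k ->
  (1 <= k)%N ->
  exists (A1 A2 : {set V}) (F1 F2 K : {set E}),
    ((* G1 = (A1,F1) and G2 = (A2,F2) are vertex-disjoint connected graphs *)
        is_graph ends A1 F1 /\ is_graph ends A2 F2 /\
        A1 != set0 /\ A2 != set0 /\
        [disjoint A1 & A2] /\
        connectedG ends A1 F1 /\ connectedG ends A2 F2 /\
        (* K is a set of k edges, each joining A1 to A2 *)
        #|K| = k /\
        (forall e, e \in K ->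
           ((ends e).1 \in A1 /\ (ends e).2 \in A2) \/
           ((ends e).1 \in A2 /\ (ends e).2 \in A1)) /\
        (* G = G1 *_K G2 *)
        A1 :|: A2 = [set: V] /\ F1 :|: F2 :|: K = [set: E] /\
        (* each G_i satisfies exactly one of (i)-(iv) *)
        exactly_one_case ends k A1 F1 /\ exactly_one_case ends k A2 F2).
Proof.
move=> ll conn lk sk k1.
have V2 : 1 < #|[set: V]|.
  rewrite ltnNge; apply/negP => H; move: lk; rewrite /lambda H => k0.
  by rewrite -k0 in k1.
have lk' : \big[minn/#|E|]_(X : {set V} | (X \subset [set: V]) && (X != set0)
     && (X != [set: V])) #|cut ends [set: E] X| = k.
  by move: lk; rewrite /lambda ifN // -ltnNge.
have [X [/andP[/andP[_ X0] XT] cX]] : exists X : {set V},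
    ((X \subset [set: V]) && (X != set0) && (X != [set: V])) /\
    #|cut ends [set: E] X| = k.
  have : \big[minn/#|E|]_(X : {set V} | (X \subset [set: V]) && (X != set0)
     && (X != [set: V])) #|cut ends [set: E] X| = #|E| \/ exists2 X : {set V},
     (X \subset [set: V]) && (X != set0) && (X != [set: V]) &
     \big[minn/#|E|]_(X : {set V} | (X \subset [set: V]) && (X != set0)
     && (X != [set: V])) #|cut ends [set: E] X| = #|cut ends [set: E] X|.
    exact: bigmin_cases.
  rewrite lk' => -[kE|[X PX cX]]; last by exists X.
  have [v _] : exists v, v \in [set: V] by apply/card_gt0P; apply: ltnW.
  have Pv : ([set v] \subset [set: V]) && ([set v] != set0) && ([set v] != [set: V]).
    rewrite subsetT /=; apply/andP; split; first by apply/set0Pn; exists v; rewrite in_set1.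
    apply/eqP => H; by move: V2; rewrite -H cards1.
  exists [set v]; split => //; apply/eqP; rewrite eqn_leq.
  rewrite {1}kE max_card /= -{1}lk'.
  by apply: bigmin_le.
have [Ts st dj] : exists2 Ts : {ffun 'I_k -> {set E}},
    (forall i, spanning_tree ends setT setT (Ts i)) &
    (forall i j, i != j -> [disjoint Ts i & Ts j]).
  have : sigma ends setT setT = 0 \/ exists2 t : 'I_#|E|.+1,
      has_disjoint_trees ends setT setT t & sigma ends setT setT = t.
    exact: bigmax_cases.
  rewrite sk => -[k0|[t Ht kt]]; first by rewrite k0 in k1.
  rewrite -kt in Ht; case/existsP: Ht => Ts /andP[/forallP st /forallP dj].
  exists Ts => // i j nij.
  by move/forallP: (dj i) => /(_ j) /implyP; apply.
have X0' : ~: X != set0.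
  apply: contra XT => /eqP H; apply/eqP/setP => v; rewrite inE.
  apply/negPn/negP => vX; have : v \in ~: X by rewrite inE.
  by rewrite H inE.
have [a aX] := set0Pn _ X0.
have XT' : ~: X != setT.
  by apply/eqP => H; move: (in_setT a); rewrite -H inE aX.
have [c1 e1] := side ll k1 st dj X0 XT cX.
have [c2 e2] := side ll k1 st dj X0' XT' (etrans (congr1 (fun S : {set E} => #|S|) (cutC ends X)) cX).
exists X, (~: X), (inside ends X), (inside ends (~: X)), (cut ends setT X).
split; first by apply/forall_inP => e; rewrite inE.
split; first by apply/forall_inP => e; rewrite inE.
do 2 (split => //).
split; first by rewrite disjoint_sym disjoints_subset.
do 3 (split => //).
split.
  move=> e; rewrite !inE /=.
  by case: ((ends e).1 \in X); case: ((ends e).2 \in X) => //= _; [left|right].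
split; first by rewrite setUCr.
split => //.
apply/setP => e; rewrite !inE.
by case: ((ends e).1 \in X); case: ((ends e).2 \in X).
Qed.
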